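(* Let $m,n$ be positive integers. Then $$\binom{3m}{3n}\equiv\binom{m}{n}(1+9mn^2-9m^2n)\pmod{27}.$$ *)

(* Defs.v *)
From mathcomp Require Import all_boot all_order all_algebra.

(* Main.v *)
Require Import Defs.
From mathcomp Require Import all_boot all_order all_algebra.
From mathcomp Require Import ring.
Import GRing.Theory Num.Theory.
Local Open Scope ring_scope.

Definition A : {poly int} := 'X^3 + 1.
Definition Q : {poly int} := 'X + 'X^2.

Lemma expand (k : nat) : exists p : {poly int},
  ('X + 1) ^+ (3 * k.+2) = A ^+ k.+2 + (A ^+ k.+1 * (3%:P * Q)) *+ k.+2
     + (A ^+ k * (9%:P * (Q ^+ 2))) *+ 'C(k.+2, 2) + 27%:P * p.
Proof.
have E : ('X + 1 : {poly int}) ^+ 3 = A + 3%:P * Q.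
  rewrite /A /Q -[3%:P]/((1 + 1 + 1)%:P) !polyCD polyC1. ring.
rewrite exprM E exprDn big_ord_recl big_ord_recl big_ord_recl.
exists (\sum_(i < k) A ^+ (k.+2 - i.+3) * (3%:P ^+ i * Q ^+ i.+3) *+ 'C(k.+2, i.+3)).
set r1 := (A ^+ k.+1 * (3%:P * Q)) *+ k.+2.
set r2 := (A ^+ k * (9%:P * (Q ^+ 2))) *+ 'C(k.+2, 2).
rewrite mulr_sumr.
have -> : \sum_(i < k)
    A ^+ (k.+2 - lift ord0 (lift ord0 (lift ord0 i))) *
    (3%:P * Q) ^+ lift ord0 (lift ord0 (lift ord0 i)) *+
    'C(k.+2, lift ord0 (lift ord0 (lift ord0 i))) =
   \sum_(i < k) 27%:P * (A ^+ (k.+2 - i.+3) * (3%:P ^+ i * Q ^+ i.+3) *+ 'C(k.+2, i.+3)).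
  apply: eq_bigr => i _.
  rewrite !lift0 exprMn; set c := 'C(_, _).
  rewrite mulrnAr; congr (_ *+ _).
  have h : (3%:P ^+ i.+3 : {poly int}) = 27%:P * 3%:P ^+ i.
    by rewrite !exprS !mulrA -!rmorphM.
  rewrite h. ring.
set S := \sum_(i < k) _.
have e0 : A ^+ (k.+2 - @ord0 k.+2) * (3%:P * Q) ^+ @ord0 k.+2 *+ 'C(k.+2, @ord0 k.+2) = A ^+ k.+2.
  by rewrite subn0 expr0 mulr1 bin0 mulr1n.
have e1 : A ^+ (k.+2 - lift (@ord0 k.+2) (@ord0 k.+1)) * (3%:P * Q) ^+ lift (@ord0 k.+2) (@ord0 k.+1) *+
    'C(k.+2, lift (@ord0 k.+2) (@ord0 k.+1)) = r1.
  by rewrite /r1 !lift0 subn1 expr1 bin1.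
have e2 : A ^+ (k.+2 - lift (@ord0 k.+2) (lift (@ord0 k.+1) (@ord0 k))) * (3%:P * Q) ^+ lift (@ord0 k.+2) (lift (@ord0 k.+1) (@ord0 k)) *+
    'C(k.+2, lift (@ord0 k.+2) (lift (@ord0 k.+1) (@ord0 k))) = r2.
  by rewrite /r2 !lift0 subn2 exprMn -rmorphXn.
rewrite e0 e1 e2; clearbody r1 r2 S.
by rewrite !addrA.
Qed.

Lemma coefX1 (k j : nat) : ((('X + 1 : {poly int}) ^+ k)`_j) = ('C(k, j))%:R.
Proof.
elim: k j => [|k IH] j.
  by rewrite expr0 coef1; case: j.
rewrite exprS mulrDl mul1r coefD coefXM.
case: j => [|j] /=; rewrite !IH; first by rewrite add0r !bin0.
by rewrite binS natrD addrC. Qed.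

Lemma Acomp (k : nat) : A ^+ k = (('X + 1) ^+ k) \Po 'X^3.
Proof.
elim: k => [|k IH]; first by rewrite !expr0 -polyC1 comp_polyC.
rewrite [LHS]exprS [X in X \Po _]exprS comp_polyM IH; congr (_ * _).
have -> : ('X + 1 : {poly int}) = 1%:P * 'X + 1%:P by rewrite polyC1 mul1r.
by rewrite comp_poly_MXaddC comp_polyC mul1r polyC1 /A.
Qed.

Lemma coefAX (j e i : nat) : (A ^+ j * 'X^e)`_i =
  if (i < e)%N then 0 else if (3 %| (i - e))%N then ('C(j, (i - e) %/ 3))%:R else 0.
Proof. rewrite coefMXn Acomp coef_comp_poly_Xn //; by rewrite coefX1. Qed.

From mathcomp Require Import zify.

Lemma coefA0 (j i : nat) : (A ^+ j)`_i =
  if (3 %| i)%N then ('C(j, i %/ 3))%:R else 0.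
Proof. by rewrite Acomp coef_comp_poly_Xn // coefX1. Qed.

Lemma coefAX0 (j e i : nat) : (i < e)%N \/ ~~ (3 %| (i - e))%N -> (A ^+ j * 'X^e)`_i = 0.
Proof. by rewrite coefAX => -[->|/negbTE ->] //; case: ifP. Qed.

Lemma coefAXt (j e i q : nat) : (i = e + 3 * q)%N -> (A ^+ j * 'X^e)`_i = ('C(j, q))%:R.
Proof.
move=> ->; rewrite coefAX ifF; last by lia.
rewrite addKn dvdn_mulr // mulKn //.
Qed.

Lemma ndvd (x : nat) : (exists y, x = 3 * y + 1 \/ x = 3 * y + 2)%N -> ~~ (3 %| x)%N.
Proof. move=> [y Hy]; apply/negP => /dvdnP [q hq]; lia. Qed.

Lemma arith (M N cmn c2 ck c3 r c : int) :
  c = cmn + 27 * r + 9 * (2 * c2) * ck -> 2 * c2 = M * (M - 1) ->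
  cmn * N * (M - N) = M * (M - 1) * ck -> M * (M - 1) * (M + 1) = 6 * c3 ->
  c - cmn * (1 + 9 * M * N ^+ 2 - 9 * M ^+ 2 * N) = (r + 2 * c3 * ck) * 27.
Proof.
move=> -> h1 h2 h3.
transitivity (27 * r + 9 * (2 * c2) * ck + 9 * M * (cmn * N * (M - N))); first ring.
rewrite h1 h2.
transitivity (27 * r + 9 * (M * (M - 1) * (M + 1)) * ck); first ring.
rewrite h3; ring.
Qed.

Lemma N1 (k : nat) : (2 * 'C(k.+2, 2) = k.+2 * k.+1)%N.
Proof. have := bin_ffact k.+2 2; rewrite !ffactnS ffactn0 /= !factS fact0. lia. Qed.

Lemma N3 (k : nat) : (k.+3 * k.+2 * k.+1 = 6 * 'C(k.+3, 3))%N.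
Proof. have := bin_ffact k.+3 3; rewrite !ffactnS ffactn0 /= !factS fact0. lia. Qed.

Lemma N2 (k l : nat) : ('C(k.+2, l.+1) * l.+1 * (k.+2 - l.+1) = k.+2 * k.+1 * 'C(k, l))%N.
Proof.
have h1 := mul_bin_diag k.+2 l.
have h2 := mul_bin_down k.+1 l.
simpl in h1, h2.
rewrite subSS (mulnC 'C(k.+2, l.+1)) -h1 -mulnA (mulnC 'C(k.+1, l)) -h2 mulnA //.
Qed.

Lemma Z2 (k l : nat) : ('C(k.+2, l.+1))%:Z * l.+1%:Z * (k.+2%:Z - l.+1%:Z) = k.+2%:Z * (k.+2%:Z - 1) * ('C(k, l))%:Z.
Proof.
case: (leqP l.+1 k.+2) => h.
  have := congr1 Posz (N2 k l); rewrite !PoszM => H.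
  rewrite (@subzn k.+2 l.+1 h) H.
  have -> : k.+2%:Z - 1 = k.+1 by rewrite (@subzn k.+2 1).
  done.
rewrite !bin_small //; last by lia.
by rewrite !mulr0 mul0r.
Qed.

Theorem lemma2p9 (m n : nat) (hm : (0 < m)%N) (hn : (0 < n)%N) :
  (('C(3 * m, 3 * n))%:Z
     = ('C(m, n))%:Z * (1 + 9 * m%:Z * n%:Z ^+ 2 - 9 * m%:Z ^+ 2 * n%:Z)
     %[mod 27])%Z.
Proof.
case: m hm => [//|[|k]] _.
  case: n hn => [//|[|n']] _; first by [].
  by rewrite !bin_small //; lia.
case: n hn => [//|l] _.
have [p Hp] := expand k.
set i := (3 * l.+1)%N.
have Hc : ('C(3 * k.+2, i))%:Z = (A ^+ k.+2)`_i + ((A ^+ k.+1 * (3%:P * Q)) *+ k.+2)`_i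
   + ((A ^+ k * (9%:P * Q ^+ 2)) *+ 'C(k.+2, 2))`_i + (27%:P * p)`_i.
  by rewrite -!coefD -Hp coefX1 natz.
have h0 : (A ^+ k.+2)`_i = ('C(k.+2, l.+1))%:R.
  rewrite coefA0 ifT; last by rewrite /i dvdn_mulr.
  by rewrite /i mulKn.
have h1 : ((A ^+ k.+1 * (3%:P * Q)) *+ k.+2)`_i = 0.
  have -> : A ^+ k.+1 * (3%:P * Q) = 3%:P * (A ^+ k.+1 * 'X^1 + A ^+ k.+1 * 'X^2).
    by rewrite /Q expr1; ring.
  rewrite coefMn coefCM coefD !coefAX0 ?mulr0 ?mul0rn //.
    by right; apply: ndvd; exists l; rewrite /i; lia.
  by right; apply: ndvd; exists l; rewrite /i; lia.
have h2 : ((A ^+ k * (9%:P * Q ^+ 2)) *+ 'C(k.+2, 2))`_i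
          = (9 * (2 * ('C(k, l))%:R)) *+ 'C(k.+2, 2).
  have -> : A ^+ k * (9%:P * Q ^+ 2)
     = 9%:P * (A ^+ k * 'X^2 + (A ^+ k * 'X^3) *+ 2 + A ^+ k * 'X^4).
    by rewrite /Q; ring.
  rewrite coefMn coefCM coefD coefD coefMn (@coefAXt _ 3 _ l); last by rewrite /i; lia.
  rewrite !coefAX0.
  - by rewrite add0r addr0; ring.
  - case: (ltnP i 4) => h; [by left|right; apply: ndvd; exists l.-1; rewrite /i in h *; lia].
  - by right; apply: ndvd; exists l; rewrite /i; lia.
have hp : (27%:P * p)`_i = 27 * p`_i by rewrite coefCM.
rewrite h0 h1 h2 hp in Hc.
apply/eqP; rewrite eqz_mod_dvd; apply/dvdzP.
exists (p`_i + 2 * ('C(k.+3, 3))%:Z * ('C(k, l))%:Z).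
apply: (@arith k.+2 l.+1 _ ('C(k.+2, 2)) _ _ _ _).
- rewrite Hc natz; ring.
- have := congr1 Posz (N1 k); rewrite !PoszM => ->.
  have -> : k.+2%:Z - 1 = k.+1 by rewrite (@subzn k.+2 1).
  done.
- exact: Z2.
- have := congr1 Posz (N3 k); rewrite !PoszM => <-.
  have -> : k.+2%:Z - 1 = k.+1 by rewrite (@subzn k.+2 1).
  have -> : k.+2%:Z + 1 = k.+3 by ring.
  ring.
Qed.
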